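(* Let $P\in\mathbb{R}^{p\times m}$, $Y_d\in\mathbb{R}^p$, plant $Y_k=PU_k+N_k$, $E_k=Y_d-Y_k$, $\bar U_k=-\Delta U_k$, $D_k=-\Delta N_k$ (so $E_{k+1}=E_k+P\bar U_k+D_k$), $\bar B=\begin{bmatrix}P\\0\end{bmatrix}$, $\bar L\in\mathbb{R}^{2p\times p}$, and the ESO $\hat{\bar X}_{k+1}=(\bar A-\bar L\bar C)\hat{\bar X}_k+\bar B\bar U_k+\bar LE_k$, $\hat{\bar X}_k=\begin{bmatrix}\hat E_k\\\hat D_k\end{bmatrix}$, so $\hat D_k=F\hat{\bar X}_k$. Let $K,H\in\mathbb{R}^{m\times p}$ and apply $\bar U_k=-KE_k-H\hat D_k$. Then $\begin{bmatrix}E_{k+1}\\\hat{\bar X}_{k+1}\end{bmatrix}=G\begin{bmatrix}E_{k}\\\hat{\bar X}_{k}\end{bmatrix}+\begin{bmatrix}I\\0\end{bmatrix}D_k$ with $G=\begin{bmatrix}I-PK&-PHF\\\bar L-\bar BK&\bar A-\bar L\bar C-\bar BHF\end{bmatrix}$, and with $T=\begin{bmatrix}I&0\\-\bar C^{\top}&I\end{bmatrix}$ one has $TGT^{-1}=\begin{bmatrix}I-PK&-PHF\\0&\bar A-\bar L\bar C\end{bmatrix}$. Hence the eigenvalues of $G$ are those of $I-PK$ together with those of $\bar A-\bar L\bar C$ (separation principle), and the gains $K$, $H$, $\bar L$ can be synthesized separately from each other.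
   Context: $\mathbb{Z}_+=\{0,1,2,\dots\}$; $\Delta f_k=f_{k+1}-f_k$. $U_k\in\mathbb{R}^m$ input, $Y_k\in\mathbb{R}^p$ output, $(N_k)\subset\mathbb{R}^p$ bounded uncertainty. $\bar A=\begin{bmatrix}I_p&I_p\\0&I_p\end{bmatrix}$, $\bar C=\begin{bmatrix}I_p&0\end{bmatrix}$, $F=\begin{bmatrix}0&I_p\end{bmatrix}$. *)

(* Defs.v *)
From HB Require Import structures.
From mathcomp Require Import all_boot all_order all_algebra.
Set Implicit Arguments. Unset Strict Implicit. Unset Printing Implicit Defensive.
Import Order.TTheory GRing.Theory Num.Theory.
Local Open Scope ring_scope.

(* Block index convention: R^{2p} is 'cV_(p + p). *)
Definition Abar {R : ringType} (p : nat) : 'M[R]_(p + p) :=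
  block_mx 1%:M 1%:M 0 1%:M.
Definition Cbar {R : ringType} (p : nat) : 'M[R]_(p, p + p) := row_mx 1%:M 0.
Definition Fsel {R : ringType} (p : nat) : 'M[R]_(p, p + p) := row_mx 0 1%:M.
Definition Bbar {R : ringType} (p m : nat) (P : 'M[R]_(p, m)) : 'M[R]_(p + p, m) :=
  col_mx P 0.

Definition fdiff {V : zmodType} (f : nat -> V) (k : nat) : V := f k.+1 - f k.

Definition Gcl {R : ringType} (p m : nat) (P : 'M[R]_(p, m)) (K H : 'M[R]_(m, p))
  (Lbar : 'M[R]_(p + p, p)) : 'M[R]_(p + (p + p)) :=
  block_mx (1%:M - P *m K) (- (P *m H *m Fsel p))
           (Lbar - Bbar P *m K) (Abar p - Lbar *m Cbar p - Bbar P *m H *m Fsel p).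

Definition Tsim {R : ringType} (p : nat) : 'M[R]_(p + (p + p)) :=
  block_mx 1%:M 0 (- (Cbar p)^T) 1%:M.

(* Main.v *)
Require Import Defs.
From HB Require Import structures.
From mathcomp Require Import all_boot all_order all_algebra.
Import Order.TTheory GRing.Theory Num.Theory.
Local Open Scope ring_scope.

Section S.
Variable R : comNzRingType.
Variables p m : nat.

Lemma CT : (Cbar (R:=R) p)^T = col_mx 1%:M 0.
Proof. by rewrite /Cbar tr_row_mx trmx1 trmx0. Qed.
Lemma FCT : Fsel (R:=R) p *m (Cbar p)^T = 0.
Proof. by rewrite CT /Fsel mul_row_col mul0mx mulmx0 addr0. Qed.
Lemma CCT : Cbar (R:=R) p *m (Cbar p)^T = 1%:M.
Proof. by rewrite CT /Cbar mul_row_col mulmx1 mulmx0 addr0. Qed.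
Lemma ACT : Abar (R:=R) p *m (Cbar p)^T = (Cbar p)^T.
Proof. by rewrite CT /Abar mul_block_col !mulmx1 !mulmx0 ?addr0 ?add0r. Qed.
Lemma CTP (P : 'M[R]_(p, m)) : (Cbar p)^T *m P = Bbar P.
Proof. by rewrite CT /Bbar mul_col_mx mul1mx mul0mx. Qed.

Definition Tinv : 'M[R]_(p + (p + p)) := block_mx 1%:M 0 ((Cbar p)^T) 1%:M.
Lemma TTi : Tsim p *m Tinv = 1%:M.
Proof.
rewrite /Tsim /Tinv mulmx_block !mulmx1 !mul1mx !mulmx0 !mul0mx !addr0 add0r addNr.
by rewrite -scalar_mx_block.
Qed.
End S.
Lemma z1 (V:zmodType) (c b l : V): -c + b + (l - b) + (0 + (c - l)) = 0.
Proof. by rewrite add0r [l - b]addrC [-c + b + _]addrA addrK [-c + l]addrC -[l - c]opprB addNr. Qed.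
Lemma z2 (V:zmodType) (x a y : V): x + (a - y - x) = a - y.
Proof. by rewrite addrC subrK. Qed.
Lemma z3 (V:zmodType) (y a1 n1 a0 n0 : V):
  y - (a1 + n1) = y - (a0 + n0) - (a1 - a0) - (n1 - n0).
Proof.
rewrite -!addrA; congr (_ + _); rewrite -!opprD; congr (- _).
by rewrite addrACA [a0 + _]addrC subrK [n0 + _]addrC subrK.
Qed.
Lemma z4 (V:zmodType) (e k h d : V): e + (-k - h) - d = (e - k) + -h - d.
Proof. by rewrite addrA. Qed.
Lemma z5 (V:zmodType) (x k h l : V): x + (-k - h) + l = (l - k) + (x - h).
Proof.
by rewrite addrC addrA addrACA.
Qed.

Lemma char_poly_sim (R : comNzRingType) n (A S Si : 'M[R]_n) :
  S *m Si = 1%:M -> char_poly (S *m A *m Si) = char_poly A.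
Proof.
move=> SSi; rewrite /char_poly.
have SSip : map_mx polyC S *m map_mx polyC Si = 1%:M by rewrite -map_mxM SSi map_mx1.
have -> : char_poly_mx (S *m A *m Si) =
   map_mx polyC S *m char_poly_mx A *m map_mx polyC Si.
  rewrite /char_poly_mx mulmxBr mulmxBl !map_mxM.
  by congr (_ - _); rewrite scalar_mxC -mulmxA SSip mulmx1.
rewrite !det_mulmx mulrC mulrA -det_mulmx mulmx1C // det1 mul1r //.
Qed.

Lemma char_poly_ublock (R : comNzRingType) n1 n2 (A : 'M[R]_n1) B (D : 'M[R]_n2) :
  char_poly (block_mx A B 0 D) = char_poly A * char_poly D.
Proof.
rewrite /char_poly /char_poly_mx map_block_mx /= map_mx0.
by rewrite scalar_mx_block opp_block_mx add_block_mx subr0 add0r det_ublock.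
Qed.

Theorem lemma5 (R : realFieldType) (p m : nat)
  (P : 'M[R]_(p, m)) (Yd : 'cV[R]_p)
  (U : nat -> 'cV[R]_m) (N Y E : nat -> 'cV[R]_p)
  (Lbar : 'M[R]_(p + p, p)) (Xhat : nat -> 'cV[R]_(p + p))
  (K H : 'M[R]_(m, p)) :
  (* bounded uncertainty *)
  (exists M : R, forall k i, `|N k i 0| <= M) ->
  (* plant and tracking error *)
  (forall k, Y k = P *m U k + N k) ->
  (forall k, E k = Yd - Y k) ->
  (* ESO, with Ubar_k = - Delta U_k *)
  (forall k, Xhat k.+1 = (Abar p - Lbar *m Cbar p) *m Xhat k
                         + Bbar P *m (- fdiff U k) + Lbar *m E k) ->
  (* control law Ubar_k = -K E_k - H Dhat_k, Dhat_k = F Xhat_k *)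
  (forall k, - fdiff U k = - (K *m E k) - H *m (Fsel p *m Xhat k)) ->
  (forall k, col_mx (E k.+1) (Xhat k.+1)
             = Gcl P K H Lbar *m col_mx (E k) (Xhat k)
               + col_mx (- fdiff N k) (0 : 'cV[R]_(p + p)))
  /\ Tsim (R := R) p \in unitmx
  /\ Tsim (R := R) p *m Gcl P K H Lbar *m invmx (Tsim (R := R) p)
     = block_mx (1%:M - P *m K) (- (P *m H *m Fsel p))
                0 (Abar p - Lbar *m Cbar p)
  /\ char_poly (Gcl P K H Lbar)
     = char_poly (1%:M - P *m K) * char_poly (Abar p - Lbar *m Cbar p).
Proof.
move=> _ HY HE HX HU.
have TTi' := TTi R p.
have Tu : Tsim (R := R) p \in unitmx.
  by case: (mulmx1_unit TTi').
have Tinv_eq : invmx (Tsim (R := R) p) = Tinv R p.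
  by rewrite -[invmx _]mulmx1 -TTi' mulmxA mulVmx // mul1mx.
have Hsim : Tsim (R := R) p *m Gcl P K H Lbar *m invmx (Tsim (R := R) p)
     = block_mx (1%:M - P *m K) (- (P *m H *m Fsel p))
                0 (Abar p - Lbar *m Cbar p).
  rewrite Tinv_eq /Tsim /Tinv /Gcl !mulmx_block.
  rewrite !mul1mx !mul0mx !mulmx1 !mulmx0 !addr0 !add0r.
  rewrite !(mulmxDl, mulmxBl, mulNmx, mulmxN, mulmxBr, mulmxDr, mulmx1, opprK, opprD, opprB).
  rewrite -!mulmxA !(FCT, ACT, CCT, mulmx0, mulmx1, oppr0, addr0).
  rewrite !mulmxA !CTP.
  congr block_mx.
    exact: z1.
  exact: z2.
split; last split=> //; last split=> //.
  move=> k.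
  rewrite /Gcl mul_block_col add_col_mx addr0.
  congr col_mx.
    have -> : E k.+1 = E k + P *m (- fdiff U k) - fdiff N k.
      by rewrite !HE !HY /fdiff mulmxN mulmxBr; apply: z3.
    rewrite HU mulmxBr !mulmxN mulmxBl mul1mx !mulNmx !mulmxA.
    exact: z4.
  rewrite HX HU mulmxBr !mulmxN mulmxDl [(Lbar - _) *m _]mulmxBl [(Abar p - _ - _) *m _]mulmxBl.
  rewrite !mulNmx !mulmxA.
  rewrite -[Abar p *m Xhat k - _]mulmxBl; exact: z5.
by rewrite -(@char_poly_ublock _ _ _ _ (- (P *m H *m Fsel p))) -Hsim Tinv_eq char_poly_sim.
Qed.
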